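(* Let $L\ge 4$ be even, and let $G=(V,E)$ be the $L\times L$ toroidal grid graph, which is bipartite. Let $A$ be one of its two color classes. Let $D\subseteq V$ be a set of even cardinality with $A\subseteq D$. Then $G$ has a $D$-join of size exactly $L^2/2$.
   Context: The $L\times L$ toroidal grid graph $G=(V,E)$ has vertex set $V=\mathbb{Z}_L\times\mathbb{Z}_L$. Its edges are $\{(i,j),(i+1,j)\}$ and $\{(i,j),(i,j+1)\}$ for all $(i,j)$, with indices mod $L$. For even $L$ its two color classes are $\{(i,j): i+j \text{ even}\}$ and $\{(i,j): i+j\text{ odd}\}$. For a set $J\subseteq E$, the $J$-degree of a vertex $v$ is the number of edges of $J$ incident to $v$. For $D\subseteq V$ of even size, a $D$-join is a set $J\subseteq E$ such that every vertex of $D$ has odd $J$-degree and every vertex of $V\setminus D$ has even $J$-degree. *)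

(* Defs.v *)
From mathcomp Require Import all_boot.
Set Implicit Arguments. Unset Strict Implicit. Unset Printing Implicit Defensive.

Definition tvert (L : nat) := ('I_L * 'I_L)%type.

Definition tadj (L : nat) (u v : tvert L) : bool :=
  ((u.2 == v.2 :> nat) && ((v.1 == (u.1.+1 %% L) :> nat) || (u.1 == (v.1.+1 %% L) :> nat)))
  || ((u.1 == v.1 :> nat) && ((v.2 == (u.2.+1 %% L) :> nat) || (u.2 == (v.2.+1 %% L) :> nat))).

Definition tedges (L : nat) : {set {set tvert L}} :=
  [set [set u; v] | u in [set: tvert L], v in [set w | tadj u w]].

Definition jdeg (L : nat) (J : {set {set tvert L}}) (v : tvert L) : nat :=
  #|[set e in J | v \in e]|.

Definition is_join (L : nat) (D : {set tvert L}) (J : {set {set tvert L}}) : Prop :=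
  J \subset tedges L /\
  forall v : tvert L, odd (jdeg J v) = (v \in D).

Definition color_class (L : nat) (b : bool) : {set tvert L} :=
  [set v : tvert L | odd (v.1 + v.2) == b].

(* Main.v *)
Require Import Defs.
From mathcomp Require Import all_boot.
From mathcomp Require Import zify.
Set Implicit Arguments. Unset Strict Implicit. Unset Printing Implicit Defensive.

Definition pth (n t : nat) : tvert n.+1 :=
  (inord (t %/ n.+1), inord (if odd (t %/ n.+1) then n - t %% n.+1 else t %% n.+1)).

Definition qth (n : nat) (v : tvert n.+1) : nat :=
  v.1 * n.+1 + (if odd v.1 then n - v.2 else v.2).

Lemma pth_dec n i x : i < n.+1 -> x < n.+1 ->
  ((pth n (i * n.+1 + x)).1 : nat) = i /\
  ((pth n (i * n.+1 + x)).2 : nat) = (if odd i then n - x else x).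
Proof.
move=> Hi Hx. rewrite /pth /= divnMDl // modnMDl (divn_small Hx) (modn_small Hx) addn0.
split; rewrite inordK //. case: ifP => _ //; lia.
Qed.

Lemma pth_decomp n t : t < n.+1 * n.+1 ->
  exists i x, [/\ i < n.+1, x < n.+1 & t = i * n.+1 + x].
Proof.
move=> Ht; exists (t %/ n.+1), (t %% n.+1); split.
- by rewrite ltn_divLR.
- by rewrite ltn_mod.
- exact: divn_eq.
Qed.

Lemma qp n t : t < n.+1 * n.+1 -> qth (pth n t) = t.
Proof.
move=> /pth_decomp [i [x [Hi Hx ->]]].
have [H1 H2] := pth_dec Hi Hx. rewrite /qth H1 H2.
case: (odd i) => //; congr (_ + _); lia.
Qed.

Lemma q_lt n (v : tvert n.+1) : qth v < n.+1 * n.+1.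
Proof.
case: v => i j; rewrite /qth /=.
have Hi := ltn_ord i; have Hj := ltn_ord j.
have Hy : (if odd i then n - j else j) < n.+1 by case: ifP => _; lia.
move: Hy; set y := (if _ then _ else _) => Hy. nia.
Qed.

Lemma pq n (v : tvert n.+1) : pth n (qth v) = v.
Proof.
case: v => i j; rewrite /qth /=.
have Hy : (if odd i then n - j else j) < n.+1 by have := ltn_ord j; case: ifP => _; lia.
have [H1 H2] := pth_dec (ltn_ord i) Hy.
case E: (pth n _) => [a c]; rewrite E /= in H1 H2.
congr pair; apply: val_inj => //=.
rewrite H2; have := ltn_ord j; case: (odd i); lia.
Qed.

Lemma pinj n a b : a < n.+1 * n.+1 -> b < n.+1 * n.+1 -> pth n a = pth n b -> a = b.
Proof. by move=> Ha Hb E; rewrite -(qp Ha) -(qp Hb) E. Qed.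

Lemma p_color n t : odd n -> t < n.+1 * n.+1 ->
  odd ((pth n t).1 + (pth n t).2) = odd t.
Proof.
move=> Hn /pth_decomp [i [x [Hi Hx ->]]].
have [H1 H2] := pth_dec Hi Hx. rewrite H1 H2.
rewrite !oddD oddM /= Hn andbF /=.
case: ifP => Hoi //. rewrite oddB; last by lia.
by rewrite Hn; case: (odd x).
Qed.

Lemma p_adj n t : 0 < n -> t.+1 < n.+1 * n.+1 -> tadj (pth n t) (pth n t.+1).
Proof.
move=> Hn0 Ht1.
have Ht : t < n.+1 * n.+1 by lia.
move: Ht1; move: (Ht) => /pth_decomp [i [x [Hi Hx Et]]] Ht1.
rewrite /tadj.
have [H1 H2] := pth_dec Hi Hx.
have [Hxn|Hxn] : x < n \/ x = n by lia.
- have Hx1 : x.+1 < n.+1 by lia.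
  have [K1 K2] := pth_dec Hi Hx1.
  have E1 : t.+1 = i * n.+1 + x.+1 by lia.
  rewrite E1 K1 K2 Et H1 H2 eqxx /=. apply/orP; right.
  case: ifP => _; apply/orP; [right|left]; apply/eqP; rewrite modn_small; lia.
- have Hi1 : i.+1 < n.+1 by nia.
  have H0 : 0 < n.+1 by [].
  have [K1 K2] := pth_dec Hi1 H0.
  have E1 : t.+1 = i.+1 * n.+1 + 0 by lia.
  rewrite E1 K1 K2 Et H1 H2 /=. apply/orP; left. apply/andP; split.
    by rewrite Hxn subn0 subnn; case: (odd i).
  by rewrite modn_small // eqxx.
Qed.
Lemma sum_pairs (f : nat -> nat) M : (forall k, k < M -> f k.*2 + f k.*2.+1 = 1) ->
  \sum_(0 <= t < M.*2) f t = M.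
Proof.
elim: M => [|M IH] H; first by rewrite big_geq.
rewrite doubleS !big_nat_recr //= IH; last by move=> k Hk; apply: H; lia.
by rewrite -addnA H // addn1.
Qed.

Lemma sum_pick (f : nat -> bool) a m :
  \sum_(0 <= t < m) ((t == a) && f t : nat) = (a < m) && f a.
Proof.
elim: m => [|m IH]; first by rewrite big_geq.
rewrite big_nat_recr //= IH.
case: (eqVneq m a) => [->|Hma] /=; first by rewrite ltnn ltnSn; case: (f a).
have Ham : (a == m) = false by rewrite eq_sym; exact: negbTE.
by rewrite addn0 ltnS (leq_eqVlt a) Ham.
Qed.

Theorem lemmaA9 (L : nat) (b : bool) (D : {set tvert L}) :
  4 <= L -> ~~ odd L ->
  ~~ odd #|D| ->
  color_class L b \subset D ->
  exists J : {set {set tvert L}}, is_join D J /\ #|J| = (L * L) %/ 2.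
Proof.
move: D; case: L => [|n] D H4 Hev HD Hsub; first by [].
have Hn : odd n by move: Hev; rewrite /= negbK.
have Hn0 : 0 < n by lia.
set N := n.+1 * n.+1.
pose c t := \sum_(0 <= u < t) (pth n u \in D : nat).
have cS t : c t.+1 = c t + (pth n t \in D) by rewrite /c big_nat_recr.
have c0 : c 0 = 0 by rewrite /c big_geq.
have cN : c N = #|D|.
  rewrite /c big_mkord -sum1_card big_mkcond /=.
  rewrite (reindex (fun t : 'I_N => pth n t)) /=; last first.
    exists (fun v => Ordinal (q_lt v)) => [t _|v _]; last by rewrite /= pq.
    by apply: val_inj; rewrite /= qp.
  by rewrite [RHS]big_mkcond; apply: eq_bigr => t _; case: (pth n t \in D).
have cNe : odd (c N) = false by rewrite cN; apply: negbTE.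
have HA t : t < N -> odd t = b -> pth n t \in D.
  move=> Ht Hb; apply: (subsetP Hsub); rewrite inE p_color //; apply/eqP.
  done.
pose S := [set t : 'I_N | (0 < t) && odd (c t)].
pose e := fun t : nat => [set pth n t.-1; pth n t].
have einj : {in S &, injective (fun t : 'I_N => e t)}.
  move=> t u; rewrite !inE => /andP [Ht _] /andP [Hu _] Heq.
  have Htn := ltn_ord t; have Hun := ltn_ord u.
  have M1 : pth n t \in e u by rewrite -Heq !inE eqxx orbT.
  have M2 : pth n t.-1 \in e u by rewrite -Heq !inE eqxx.
  apply: val_inj => /=.
  move: M1 M2; rewrite !inE => /orP [/eqP E1|/eqP E1] /orP [/eqP E2|/eqP E2].
  - have Hu1 : u.-1 < N by lia.
    have Ht1 : t.-1 < N by lia.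
    have := pinj Htn Hu1 E1; have := pinj Ht1 Hu1 E2; lia.
  - have Hu1 : u.-1 < N by lia.
    have Ht1 : t.-1 < N by lia.
    have := pinj Htn Hu1 E1; have := pinj Ht1 Hun E2; lia.
  - exact: (pinj Htn Hun E1).
  - exact: (pinj Htn Hun E1).
have EN : (N./2).*2 = N.
  by rewrite -{2}(odd_double_half N) oddM (negbTE Hev).
exists ((fun t : 'I_N => e t) @: S); split; last first.
  rewrite card_in_imset //.
  have -> : #|S| = \sum_(0 <= t < N) (odd (c t) : nat).
    rewrite -sum1_card big_mkcond big_mkord /=. apply: eq_bigr => t _. rewrite inE.
    by case: (posnP t) => [->|Hp] /=; [rewrite c0 | case: (odd (c t))].
  rewrite divn2; set M := N./2 in EN *; rewrite -{1}EN.
  case: b Hsub HA => Hsub HA.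
  - have : \sum_(0 <= t < N.+1) (odd (c t) : nat) = \sum_(0 <= t < N) odd (c t.+1).
      by rewrite big_nat_recl // c0.
    rewrite big_nat_recr //= cNe addn0 -EN => ->.
    apply: sum_pairs => k Hk.
    have Hk2 : k.*2.+1 < N by rewrite -EN; lia.
    have HkD := HA _ Hk2 (etrans (oddS _) (congr1 negb (odd_double k))).
    rewrite /= (cS k.*2.+1) HkD addn1 /=. by case: (odd _).
  - apply: sum_pairs => k Hk.
    have Hk2 : k.*2 < N by rewrite -EN; lia.
    have HkD := HA _ Hk2 (odd_double _).
    rewrite cS HkD addn1 /=. by case: (odd _).
split.
  apply/subsetP => x /imsetP [t Ht ->]. rewrite inE in Ht; move/andP: Ht => [Ht0 _].
  apply/imset2P; exists (pth n t.-1) (pth n t) => //; rewrite inE.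
  have := @p_adj n t.-1 Hn0; rewrite prednK //; apply; exact: ltn_ord.
move=> v. rewrite /jdeg.
have -> : [set x in (fun t : 'I_N => e t) @: S | v \in x] =
          (fun t : 'I_N => e t) @: [set t in S | v \in e t].
  apply/setP => x; rewrite !inE; apply/andP/imsetP.
  - case=> /imsetP [t Ht ->] Hv. by exists t => //; rewrite inE Ht Hv.
  - case=> t; rewrite inE => /andP[Ht Hv] ->; split => //; apply/imsetP; exists t => //.
rewrite card_in_imset; last by move=> x y /setIdP[Hx _] /setIdP[Hy _]; exact: einj.
set k := qth v. have Hk : k < N := q_lt v. have Ev : v = pth n k by rewrite pq.
have -> : #|[set t in S | v \in e t]| = \sum_(0 <= t < N)
    (((t == k.+1) && odd (c t) : nat) + ((t == k) && ((0 < t) && odd (c t)))).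
  rewrite -sum1_card big_mkcond big_mkord /=; apply: eq_bigr => t _; rewrite !inE.
  have Htn := ltn_ord t.
  have E1 : (v == pth n t) = (t == k :> nat).
    rewrite Ev; apply/eqP/eqP => [H|->//]; by rewrite (pinj Hk Htn H).
  have Ht1 : t.-1 < N by lia.
  have E2 : (v == pth n t.-1) = (t.-1 == k).
    rewrite Ev; apply/eqP/eqP => [H|->//]; by rewrite (pinj Hk Ht1 H).
  rewrite E1 E2. move: Htn Ht1; case: (nat_of_ord t) => [|t'] _ _ //=.
    by rewrite andbF.
  case: (odd (c t'.+1)) => /=; last by rewrite !andbF.
  rewrite !andbT.
  case: (eqVneq t' k) => [->|Hne] /=; first by rewrite eqxx eqn_leq ltnn.
  by rewrite eqSS (negbTE Hne) add0n.
rewrite big_split /= !sum_pick Hk /=.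
have -> : (k.+1 < N) && odd (c k.+1) = odd (c k.+1).
  case: ltnP => //= H. have -> : k.+1 = N by lia. by rewrite cNe.
have -> : (0 < k) && odd (c k) = odd (c k) by case: (posnP k) => [->|]; rewrite ?c0.
rewrite cS -Ev. by case: (v \in D); rewrite ?addn0 ?addn1 /=; case: (odd (c k)).
Qed.
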